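(* Let $\eta:0\to X\xrightarrow{\iota}Y\xrightarrow{\pi}S\to0$ be a short exact sequence in $\operatorname{rep}(Q)$ and let $R$ be $R_d$ or $R_{d,\mathrm{str}}$. An element $(V,W)\in\operatorname{Gr}^R(\Phi(X))\times\operatorname{Gr}^R(\Phi(S))$ lies in the image of $\Psi$ if and only if the canonical map $\operatorname{Ext}^1_R(\Phi(S),\Phi(X))\to\operatorname{Ext}^1_R(W,\Phi(X)/V)$ (induced by the inclusion $W\hookrightarrow\Phi(S)$ and the projection $\Phi(X)\twoheadrightarrow\Phi(X)/V$) maps the class of $\Phi(\eta)$ to $0$.
   Context: $K=\mathbb{C}$; $Q$ a finite quiver, $\operatorname{rep}(Q)$ its finite-dimensional representations. For $d\geqslant1$, $Q_d$ has vertices $v(Q)\times\{1,\dots,d\}$, arrows $(i,r)\to(i,r+1)$ ($r\leqslant d-1$) and $(i,r)\to(j,r)$ for each arrow $i\to j$ of $Q$, $r\in\{1,\dots,d\}$. For $d\geqslant2$, $Q_{d,\mathrm{str}}$ has the same vertices and vertical arrows and arrows $(i,r)\to(j,r-1)$ for each arrow $i\to j$, $r\in\{2,\dots,d\}$. $R_d=KQ_d/I$, $R_{d,\mathrm{str}}=KQ_{d,\mathrm{str}}/I$ with $I$ the ideal identifying all paths with equal source and target. $\Phi:\operatorname{rep}(Q)\to\operatorname{Mod}(R)$ is the exact functor with $\Phi(X)_{(i,r)}=X_i$, identity on vertical arrows, $X_{i\to j}$ on arrows coming from $i\to j$, and $\Phi(f)_{(i,r)}=f_i$. $\operatorname{Gr}^R(T)$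 is the set of $R$-submodules of $T$. $\Psi:\operatorname{Gr}^R(\Phi(Y))\to\operatorname{Gr}^R(\Phi(X))\times\operatorname{Gr}^R(\Phi(S))$, $U\mapsto(\Phi(\iota)^{-1}(U),\Phi(\pi)(U))$. *)

(* Defs.v *)
(* Finite-dimensional representations of quivers are encoded
   with matrices acting on row vectors: x |-> x *m rmap M a. *)
From HB Require Import structures.
From mathcomp Require Import all_boot all_algebra.
Set Implicit Arguments. Unset Strict Implicit. Unset Printing Implicit Defensive.
Import GRing.Theory.
Local Open Scope ring_scope.

Record quiver := Quiver {
  qv : finType; qa : finType; qs : qa -> qv; qt : qa -> qv }.

Section Reps.
Variable K : fieldType.

Record rep (G : quiver) := Rep {
  rdim : qv G -> nat;
  rmap : forall a : qa G, 'M[K]_(rdim (qs a), rdim (qt a)) }.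

Definition homfam (G : quiver) (M N : rep G) := forall v : qv G, 'M[K]_(rdim M v, rdim N v).

Definition is_hom (G : quiver) (M N : rep G) (f : homfam M N) : Prop :=
  forall a : qa G, rmap M a *m f (qt a) = f (qs a) *m rmap N a.

Definition is_ses (G : quiver) (A B C : rep G) (i : homfam A B) (p : homfam B C) : Prop :=
  [/\ is_hom i, is_hom p &
      forall v, [/\ row_free (i v), (i v == kermx (p v))%MS & row_full (p v)]].

Fixpoint is_path (G : quiver) (v : qv G) (p : seq (qa G)) (w : qv G) : bool :=
  match p with
  | [::] => v == w
  | a :: p' => (qs a == v) && is_path (qt a) p' w
  end.

Fixpoint pathmx (G : quiver) (M : rep G) (v : qv G) (p : seq (qa G)) (w : qv G)
  : 'M[K]_(rdim M v, rdim M w) :=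
  match p with
  | [::] => conform_mx 0 (1%:M : 'M[K]_(rdim M v))
  | a :: p' => conform_mx 0 (rmap M a) *m pathmx M (qt a) p' w
  end.

(* modules over KG/I, where I identifies parallel paths with the same
   label sequence (lab sends each arrow of G to an arrow of Q or to None) *)
Definition is_rmod (G : quiver) (T : eqType) (lab : qa G -> option T) (M : rep G) : Prop :=
  forall v w (p q : seq (qa G)), is_path v p w -> is_path v q w ->
    pmap lab p = pmap lab q -> pathmx M v p w = pathmx M v q w.

(* submodules: families of subspaces (row spaces) stable under all arrows *)
Definition subfam (G : quiver) (M : rep G) := forall v : qv G, 'M[K]_(rdim M v).

Definition is_subrep (G : quiver) (M : rep G) (U : subfam M) : Prop :=
  forall a : qa G, (U (qs a) *m rmap M a <= U (qt a))%MS.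

(* Yoneda description: for an extension xi : 0 -> B --i--> E --p--> A -> 0,
   f : A' -> A and g : B -> B', the class Ext^1(f,g)[xi] = [g_* f^* xi]
   vanishes iff there is an extension theta : 0 -> B --j--> T --q--> A' -> 0
   (necessarily f^* xi) with a morphism of extensions theta -> xi which is
   (id, f) on the ends, and such that g_* theta splits, i.e. g extends
   along j to a morphism r : T -> B'. *)
Definition ext_image_zero (G : quiver) (Tl : eqType) (lab : qa G -> option Tl)
  (B E A A' B' : rep G) (i : homfam B E) (p : homfam E A)
  (f : homfam A' A) (g : homfam B B') : Prop :=
  exists (T : rep G) (j : homfam B T) (q : homfam T A') (t : homfam T E) (r : homfam T B'),
    [/\ is_rmod lab T, is_ses j q, is_hom t, is_hom r &
        forall v, [/\ j v *m t v = i v, t v *m p v = q v *m f v & j v *m r v = g v]].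

End Reps.

(* The quivers Q_d (str = false) and Q_{d,str} (str = true).
   Vertex (i, r) with r : 'I_d stands for (i, r+1). *)
Definition ordprev d (r : 'I_d) : 'I_d :=
  Ordinal (leq_ltn_trans (leq_pred r) (ltn_ord r)).

Definition Qd_arr (Q : quiver) (d : nat) (str : bool) : finType :=
  ({p : qv Q * 'I_d | (p.2.+1 < d)%N} + {p : qa Q * 'I_d | str ==> (0 < p.2)%N})%type.

Definition Qd_src (Q : quiver) d str (a : Qd_arr Q d str) : qv Q * 'I_d :=
  match a with
  | inl p => val p
  | inr p => (qs (val p).1, (val p).2)
  end.

Definition Qd_tgt (Q : quiver) d str (a : Qd_arr Q d str) : qv Q * 'I_d :=
  match a with
  | inl p => ((val p).1, Ordinal (valP p))
  | inr p => (qt (val p).1, if str then ordprev (val p).2 else (val p).2)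
  end.

Definition Qd (Q : quiver) d str : quiver :=
  @Quiver (qv Q * 'I_d)%type (Qd_arr Q d str) (@Qd_src Q d str) (@Qd_tgt Q d str).

Definition Qd_lab (Q : quiver) d str (a : qa (Qd Q d str)) : option (qa Q) :=
  match a with inl _ => None | inr p => Some (val p).1 end.

Section Phi.
Variables (K : fieldType) (Q : quiver) (d : nat) (str : bool).

Definition Phi_map (X : rep K Q) (a : qa (Qd Q d str))
  : 'M[K]_(rdim X (qs a).1, rdim X (qt a).1) :=
  match a as a0 return 'M[K]_(rdim X (@qs (Qd Q d str) a0).1, rdim X (@qt (Qd Q d str) a0).1) with
  | inl p => 1%:M
  | inr p => rmap X (val p).1
  end.

Definition Phi (X : rep K Q) : rep K (Qd Q d str) :=
  @Rep K (Qd Q d str) (fun v => rdim X v.1) (Phi_map X).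

Definition Phi_hom (X Y : rep K Q) (f : homfam X Y) : homfam (Phi X) (Phi Y) :=
  fun v => f v.1.

(* U |-> (Phi(iota)^{-1}(U), Phi(pi)(U)) is (V, W) for some submodule U *)
Definition in_image_Psi (X Y S : rep K Q) (iota : homfam X Y) (pi : homfam Y S)
  (V : subfam (Phi X)) (W : subfam (Phi S)) : Prop :=
  exists U : subfam (Phi Y), is_subrep U /\
    forall v, (kermx (Phi_hom iota v *m cokermx (U v)) == V v)%MS /\
              (U v *m Phi_hom pi v == W v)%MS.
End Phi.

(* Main.v *)
Require Import Defs.
From HB Require Import structures.
From mathcomp Require Import all_boot all_algebra.
From mathcomp Require Import reals complex.
Import GRing.Theory.
Local Open Scope ring_scope.
Set Implicit Arguments. Unset Strict Implicit. Unset Printing Implicit Defensive.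

Section Gen.
Variables (K : fieldType) (G : quiver).

Lemma hom_path (M N : rep K G) (f : homfam M N) : is_hom f ->
  forall p v w, is_path v p w -> pathmx M v p w *m f w = f v *m pathmx N v p w.
Proof.
move=> hf; elim=> [|a p IH] v w /=.
  by move/eqP=> Ev; subst w; rewrite !conform_mx_id mul1mx mulmx1.
case/andP=> /eqP Ev hp; subst v.
by rewrite !conform_mx_id -mulmxA IH // !mulmxA hf.
Qed.

Lemma rmod_inj (T : eqType) (lab : qa G -> option T) (M N : rep K G) (f : homfam M N) :
  is_hom f -> (forall v, row_free (f v)) -> is_rmod lab N -> is_rmod lab M.
Proof.
move=> hf hfr hN v w p q hp hq hl; apply: (row_free_inj (hfr w)) => /=.
by rewrite !hom_path // (hN v w p q hp hq hl).
Qed.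

Lemma rmod_surj (T : eqType) (lab : qa G -> option T) (M N : rep K G) (f : homfam M N) :
  is_hom f -> (forall v, row_full (f v)) -> is_rmod lab M -> is_rmod lab N.
Proof.
move=> hf hfr hM v w p q hp hq hl; apply: (row_full_inj (hfr v)) => /=.
by rewrite -!hom_path // (hM v w p q hp hq hl).
Qed.

Lemma hom_comp (L M N : rep K G) (f : homfam L M) (g : homfam M N) :
  is_hom f -> is_hom g -> is_hom ((fun v => f v *m g v) : homfam L N).
Proof. by move=> hf hg a; rewrite mulmxA hf -!mulmxA hg. Qed.

Lemma hom_cancel (L M N : rep K G) (f : homfam L M) (g : homfam M N) :
  is_hom g -> (forall v, row_free (g v)) ->
  is_hom ((fun v => f v *m g v) : homfam L N) -> is_hom f.
Proof.
move=> hg hgr hfg a; apply: (row_free_inj (hgr (qt a))) => /=.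
by rewrite -mulmxA hfg -!mulmxA hg.
Qed.

Definition subrep (M : rep K G) (k : qv G -> nat) (b : forall v, 'M[K]_(k v, rdim M v)) : rep K G :=
  @Rep K G k (fun a => b (qs a) *m rmap M a *m pinvmx (b (qt a))).

Lemma subrep_hom (M : rep K G) k (b : forall v, 'M[K]_(k v, rdim M v)) :
  (forall a, (b (qs a) *m rmap M a <= b (qt a))%MS) ->
  is_hom (b : homfam (subrep b) M).
Proof. by move=> h a /=; rewrite mulmxKpV. Qed.

Definition qmx (M : rep K G) (V : subfam M) v : 'M[K]_(rdim M v, \rank (cokermx (V v))) :=
  col_base (cokermx (V v)).

Definition quotrep (M : rep K G) (V : subfam M) : rep K G :=
  @Rep K G (fun v => \rank (cokermx (V v)))
    (fun a => pinvmx (qmx V (qs a)) *m rmap M a *m qmx V (qt a)).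

Lemma ker_qmx (M : rep K G) (V : subfam M) v : (kermx (qmx V v) :=: V v)%MS.
Proof.
apply/eqmxP/andP; split.
  rewrite submxE; apply/eqP.
  transitivity (kermx (qmx V v) *m (qmx V v *m row_base (cokermx (V v)))).
    by rewrite /qmx mulmx_base.
  by rewrite mulmxA mulmx_ker mul0mx.
rewrite sub_kermx -(mulmx_free_eq0 _ (row_base_free (cokermx (V v)))).
by rewrite -mulmxA mulmx_base mulmx_coker.
Qed.

Lemma quot_hom (M : rep K G) (V : subfam M) : is_subrep V ->
  is_hom (qmx V : homfam M (quotrep V)).
Proof.
move=> hV a /=; set n := qmx V (qs a).
have E : (1%:M - n *m pinvmx n) *m n = 0.
  by rewrite mulmxBl mul1mx mulmxKpV ?subrr.
have : ((1%:M - n *m pinvmx n) *m rmap M a <= kermx (qmx V (qt a)))%MS.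
  rewrite ker_qmx; apply: submx_trans (hV a); apply: submxMr.
  by rewrite -(ker_qmx V (qs a)); apply/sub_kermxP.
move/sub_kermxP; rewrite !mulmxBl mul1mx => /eqP; rewrite subr_eq0 => /eqP ->.
by rewrite !mulmxA.
Qed.
End Gen.
Section PhiL.
Variables (K : fieldType) (Q : quiver) (d : nat) (str : bool).

Fixpoint qpath (X : rep K Q) i (l : seq (qa Q)) j : 'M[K]_(rdim X i, rdim X j) :=
  match l with
  | [::] => conform_mx 0 (1%:M : 'M_(rdim X i))
  | a :: l' => conform_mx 0 (rmap X a) *m qpath X (qt a) l' j
  end.

Lemma Phi_path (X : rep K Q) v p w : is_path v p w ->
  pathmx (Phi d str X) v p w = qpath X v.1 (pmap (@Qd_lab Q d str) p) w.1.
Proof.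
elim: p v => [|a p IH] v /=.
  by move/eqP=> Ev; subst w.
case/andP=> /eqP Ev hp; subst v; rewrite IH //.
case: a hp => [p0|p0] hp /=; rewrite !conform_mx_id ?mul1mx //.
Qed.

Lemma Phi_rmod (X : rep K Q) : is_rmod (@Qd_lab Q d str) (Phi d str X).
Proof. by move=> v w p q hp hq hl; rewrite !Phi_path // hl. Qed.

Lemma Phi_hom_hom (X Y : rep K Q) (f : homfam X Y) : is_hom f ->
  is_hom (Phi_hom (d:=d) (str:=str) f).
Proof. by move=> hf [p|p] /=; [rewrite mul1mx mulmx1 | exact: hf]. Qed.
End PhiL.
Section Vert.
Variable K : fieldType.

Lemma vertex_back (nx ny ns nt nw nq : nat) (io : 'M[K]_(nx,ny)) (pi : 'M_(ny,ns))
  (V : 'M_nx) (W : 'M_ns) (w : 'M_(nw,ns)) (q : 'M_(nx,nq)) (j : 'M_(nx,nt))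
  (q' : 'M_(nt,nw)) (t : 'M_(nt,ny)) (r : 'M_(nt,nq)) :
  row_free io -> row_free w -> (w :=: W)%MS -> row_full q -> (kermx q :=: V)%MS ->
  (j :=: kermx q')%MS -> row_full q' -> j *m t = io -> t *m pi = q' *m w -> j *m r = q ->
  (kermx (io *m cokermx <<kermx r *m t>>%MS) == V)%MS /\ (<<kermx r *m t>>%MS *m pi == W)%MS.
Proof.
move=> hio hwf hwW hqf hqV hj hq'f hjt htp hjr.
have tfree : row_free t.
  rewrite -kermx_eq0; set z := kermx t.
  have zt : z *m t = 0 := mulmx_ker t.
  have zq : z *m q' = 0.
    by apply/eqP; rewrite -(mulmx_free_eq0 _ hwf) -mulmxA -htp mulmxA zt mul0mx.
  have : (z <= j)%MS by rewrite hj; apply/sub_kermxP.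
  case/submxP => D hD.
  have : D *m io = 0 by rewrite -hjt mulmxA -hD zt.
  move/eqP; rewrite mulmx_free_eq0 // => /eqP D0.
  by apply/eqP; rewrite hD D0 mul0mx.
split; apply/andP; split.
- set K0 := kermx (io *m cokermx <<kermx r *m t>>%MS).
  have h1 : (K0 *m io <= <<kermx r *m t>>%MS)%MS.
    by rewrite submxE -mulmxA /K0; apply/eqP; apply: mulmx_ker.
  move: h1; rewrite genmxE => /submxP [D hD].
  rewrite -hjt (mulmxA K0) (mulmxA D) in hD.
  move/(row_free_inj tfree): hD => hD.
  rewrite -hqV; apply/sub_kermxP; rewrite -hjr mulmxA hD -mulmxA mulmx_ker mulmx0 //.
- rewrite sub_kermx mulmxA -submxE genmxE -hjt mulmxA submxMr //.
  apply/sub_kermxP; rewrite -mulmxA hjr; apply/sub_kermxP; by rewrite hqV.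
- rewrite -hwW (eqmxMr _ (genmxE _)) -mulmxA htp mulmxA submxMl //.
- rewrite -hwW (eqmxMr _ (genmxE _)) -mulmxA htp mulmxA.
  rewrite -{1}[w]mul1mx submxMr //.
  have hB : 1%:M *m pinvmx q *m q = 1%:M := mulmxKpV (submx_full _ hqf).
  rewrite mul1mx in hB.
  have jq0 : j *m q' = 0 by apply/sub_kermxP; rewrite hj.
  have e1 : (1%:M - r *m pinvmx q *m j) *m r = 0.
    by rewrite mulmxBl mul1mx -(mulmxA (r *m pinvmx q)) hjr -(mulmxA r) hB mulmx1 subrr.
  have e2 : (1%:M - r *m pinvmx q *m j) *m q' = q'.
    by rewrite mulmxBl mul1mx -(mulmxA (r *m pinvmx q)) jq0 mulmx0 subr0.
  apply: (submx_trans (_ : (1%:M <= q')%MS)); first by rewrite sub1mx.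
  rewrite -{1}e2; apply: submxMr; exact/sub_kermxP.
Qed.

Lemma vertex_fwd (nx ny ns nw nq : nat) (io : 'M[K]_(nx,ny)) (pi : 'M_(ny,ns))
  (V : 'M_nx) (W : 'M_ns) (U : 'M_ny) (w : 'M_(nw,ns)) (q : 'M_(nx,nq))
  (b : 'M_(\rank (kermx (pi *m cokermx W)), ny)) (Rm : 'M_(ny, nq)) :
  row_free io -> (io :=: kermx pi)%MS -> row_free w -> (w :=: W)%MS ->
  (kermx q :=: V)%MS -> (kermx (io *m cokermx U) :=: V)%MS -> (U *m pi :=: W)%MS ->
  b = row_base (kermx (pi *m cokermx W)) ->
  Rm = pinvmx (col_mx io U) *m col_mx q 0 ->
  [/\ io *m Rm = q, U *m Rm = 0, (b <= io + U)%MS, io *m pinvmx b *m b = io &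
     [/\ b *m pi *m pinvmx w *m w = b *m pi, (b *m pi <= W)%MS,
       row_free (io *m pinvmx b), (io *m pinvmx b == kermx (b *m pi *m pinvmx w))%MS
       & row_full (b *m pi *m pinvmx w)]].
Proof.
move=> hio hioK hwf hwW hqV hK hUW hb hRm.
have iopi : io *m pi = 0 by apply/sub_kermxP; rewrite -hioK.
have bP : (b :=: kermx (pi *m cokermx W))%MS by rewrite hb; exact: eq_row_base.
have bfree : row_free b by rewrite hb; exact: row_base_free.
have bpiW : (b *m pi <= W)%MS by rewrite submxE -mulmxA -sub_kermx bP.
have iob : (io <= b)%MS by rewrite bP sub_kermx mulmxA iopi mul0mx.
have hd : io *m pinvmx b *m b = io := mulmxKpV iob.
have hbw : (b *m pi <= w)%MS by rewrite hwW.
have he := mulmxKpV hbw.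
have UP : (U <= b)%MS by rewrite bP sub_kermx mulmxA -submxE hUW.
set M := col_mx io U; set C := col_mx q (0 : 'M_(ny, nq)).
have kMC : (kermx M <= kermx C)%MS.
  set z := kermx M.
  have zM : z *m M = 0 := mulmx_ker M.
  rewrite -[z]hsubmxK mul_row_col in zM.
  have hl : (lsubmx z <= V)%MS.
    rewrite -hK sub_kermx mulmxA.
    have -> : lsubmx z *m io = - (rsubmx z *m U) by apply/eqP; rewrite -addr_eq0 zM.
    by rewrite mulNmx -mulmxA mulmx_coker mulmx0 oppr0.
  apply/sub_kermxP; rewrite -[z]hsubmxK mul_row_col mulmx0 addr0.
  by apply/sub_kermxP; rewrite hqV.
have MRm : M *m Rm = C.
  have : (1%:M - M *m pinvmx M) *m M = 0 by rewrite mulmxBl mul1mx mulmxKpV ?subrr.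
  move/sub_kermxP => h; have := submx_trans h kMC; move/sub_kermxP.
  rewrite mulmxBl mul1mx => /eqP; rewrite subr_eq0 => /eqP hC.
  by rewrite hRm mulmxA -hC.
move: MRm; rewrite /M /C mul_col_mx => /eq_col_mx [h1 h2].
split => //.
- have : (b *m pi <= U *m pi)%MS by rewrite hUW.
  case/submxP => Z hZ.
  rewrite -[b](subrK (Z *m U)) addmx_sub_adds ?submxMl //.
  by rewrite hioK sub_kermx mulmxBl hZ mulmxA subrr.
split => //.
- case/row_freeP: hio => B hB; apply/row_freeP; exists (b *m B); by rewrite mulmxA hd.
- apply/andP; split.
    by rewrite sub_kermx !mulmxA hd iopi !mul0mx.
  set z := kermx (b *m pi *m pinvmx w).
  have zq := mulmx_ker (b *m pi *m pinvmx w); rewrite -/z !mulmxA in zq.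
  have : z *m b *m pi = 0 by rewrite -mulmxA -he !mulmxA zq mul0mx.
  move/sub_kermxP; rewrite -hioK => /submxP [D hD].
  have -> : z = D *m (io *m pinvmx b).
    by apply: (row_free_inj bfree); rewrite /= hD -mulmxA hd.
  exact: submxMl.
- rewrite -sub1mx -(submxMfree _ _ hwf) mul1mx he.
  by rewrite hwW -hUW submxMr.
Qed.
End Vert.
Lemma main_gen (K : fieldType) (Q : quiver) (d : nat) (str : bool)
  (X Y S : rep K Q) (iota : homfam X Y) (pi : homfam Y S)
  (eta : is_ses iota pi)
  (V : subfam (Phi d str X)) (W : subfam (Phi d str S))
  (hV : is_subrep V) (hW : is_subrep W) :
  in_image_Psi iota pi V W <->
  (forall (W' : rep K (Qd Q d str)) (w : homfam W' (Phi d str S))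
          (Xq : rep K (Qd Q d str)) (q : homfam (Phi d str X) Xq),
     is_rmod (@Qd_lab Q d str) W' -> is_hom w ->
     (forall v, row_free (w v) /\ (w v == W v)%MS) ->
     is_rmod (@Qd_lab Q d str) Xq -> is_hom q ->
     (forall v, row_full (q v) /\ (kermx (q v) == V v)%MS) ->
     ext_image_zero (@Qd_lab Q d str) (Phi_hom iota : homfam (Phi d str X) (Phi d str Y)) (Phi_hom pi : homfam (Phi d str Y) (Phi d str S)) w q).
Proof.
case: eta => hi hp hses.
have hiP := Phi_hom_hom (d:=d) (str:=str) hi.
have hpP := Phi_hom_hom (d:=d) (str:=str) hp.
split.
- move=> [U [hU hUv]] W' w Xq q hW'm hw hwv hXm hq hqv.
  pose P v := kermx (Phi_hom (d:=d) (str:=str) pi v *m cokermx (W v)).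
  pose b v := row_base (P v).
  pose Rm v := pinvmx (col_mx (Phi_hom (d:=d) (str:=str) iota v) (U v)) *m col_mx (q v) 0.
  have VF v := @vertex_fwd K _ _ _ _ _ (Phi_hom (d:=d) (str:=str) iota v)
      (Phi_hom (d:=d) (str:=str) pi v) (V v) (W v) (U v) (w v) (q v) (b v) (Rm v)
      (let: And3 h _ _ := hses v.1 in h)
      (let: And3 _ h _ := hses v.1 in eqmxP h)
      (proj1 (hwv v)) (eqmxP (proj2 (hwv v)))
      (eqmxP (proj2 (hqv v))) (eqmxP (proj1 (hUv v))) (eqmxP (proj2 (hUv v)))
      erefl erefl.
  have VFa v := let: And5 h _ _ _ _ := VF v in h.
  have VFb v := let: And5 _ h _ _ _ := VF v in h.
  have VFc v := let: And5 _ _ h _ _ := VF v in h.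
  have VFd v := let: And5 _ _ _ h _ := VF v in h.
  have VFe v := let: And5 _ _ _ _ (And5 h _ _ _ _) := VF v in h.
  have VFf v := let: And5 _ _ _ _ (And5 _ h _ _ _) := VF v in h.
  have VFg v := let: And5 _ _ _ _ (And5 _ _ h _ _) := VF v in h.
  have VFh v := let: And5 _ _ _ _ (And5 _ _ _ h _) := VF v in h.
  have VFi v := let: And5 _ _ _ _ (And5 _ _ _ _ h) := VF v in h.
  have hsub : forall a, (b (qs a) *m rmap (Phi d str Y) a <= b (qt a))%MS.
    move=> a; rewrite /b (eq_row_base (P (qt a))) /P sub_kermx mulmxA -submxE.
    rewrite -mulmxA (hpP a) mulmxA.
    apply: submx_trans (hW a); apply: submxMr; exact: VFf.
  have hbh := subrep_hom hsub.
  have bfree v : row_free (b v) by exact: row_base_free.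
  exists (subrep b), (fun v => Phi_hom iota v *m pinvmx (b v)),
    (fun v => b v *m Phi_hom pi v *m pinvmx (w v)), b, (fun v => b v *m Rm v).
  split.
  + exact: rmod_inj hbh bfree (@Phi_rmod _ _ d str Y).
  + split.
    * apply: (hom_cancel hbh bfree) => a /=; rewrite !VFd; exact: hiP.
    * apply: (hom_cancel hw (fun v => proj1 (hwv v))) => a /=; rewrite !VFe.
      exact: (hom_comp hbh hpP a).
    * move=> v; split; [exact: VFg | exact: VFh | exact: VFi].
  + exact: hbh.
  + move=> a /=; rewrite mulmxA (mulmxKpV (hsub a)).
    have e1 : Phi_hom iota (qs a) *m rmap (Phi d str Y) a *m Rm (qt a)
            = Phi_hom iota (qs a) *m Rm (qs a) *m rmap Xq a.
      by rewrite -(hiP a) -mulmxA !VFa hq.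
    have e2 : U (qs a) *m rmap (Phi d str Y) a *m Rm (qt a)
            = U (qs a) *m Rm (qs a) *m rmap Xq a.
      rewrite VFb mul0mx; case/submxP: (hU a) => D ->.
      by rewrite -mulmxA VFb mulmx0.
    case/sub_addsmxP: (VFc (qs a)) => [[z1 z2] /= ->].
    by rewrite !mulmxDl -!(mulmxA z1) -!(mulmxA z2) e1 e2.
  + move=> v; split; first exact: VFd.
      by rewrite VFe.
    by rewrite mulmxA VFd VFa.
- move=> H.
  pose Wb v := row_base (W v).
  have hsubW : forall a, (Wb (qs a) *m rmap (Phi d str S) a <= Wb (qt a))%MS.
    by move=> a; rewrite (eqmxMr _ (eq_row_base _)) eq_row_base; exact: hW a.
  have hWb := subrep_hom hsubW.
  have hqh := quot_hom hV.
  have := H (subrep Wb) Wb (quotrep V) (qmx V)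
    (rmod_inj hWb (fun v => row_base_free _) (@Phi_rmod _ _ d str S)) hWb
    (fun v => conj (row_base_free _) (introT eqmxP (eq_row_base _)))
    (rmod_surj hqh (fun v => col_base_full _) (@Phi_rmod _ _ d str X)) hqh
    (fun v => conj (col_base_full _) (introT eqmxP (ker_qmx V v))).
  case=> T [j [q' [t [r [hT [hj hq' hjq] ht hr hv]]]]].
  exists (fun v => <<kermx (r v) *m t v>>%MS); split.
    move=> a /=; rewrite (eqmxMr _ (genmxE _)) genmxE.
    rewrite -mulmxA -ht mulmxA submxMr //.
    apply/sub_kermxP; rewrite -mulmxA hr mulmxA mulmx_ker mul0mx //.
  move=> v /=; have [hjfree hjK hq'full] := hjq v; case: (hv v) => hjt htp hjr.
  apply: (vertex_back (let: And3 h _ _ := hses v.1 in h) (row_base_free _)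
    (eq_row_base _) (col_base_full _) (ker_qmx V v) (eqmxP hjK) hq'full hjt htp hjr).
Qed.

Theorem lemma3p4 (R : realType) (Q : quiver) (d : nat) (str : bool)
  (hd : (1 + str <= d)%N)
  (X Y S : rep R[i] Q) (iota : homfam X Y) (pi : homfam Y S)
  (eta : is_ses iota pi)
  (V : subfam (Phi d str X)) (W : subfam (Phi d str S))
  (hV : is_subrep V) (hW : is_subrep W) :
  in_image_Psi iota pi V W <->
  (forall (W' : rep R[i] (Qd Q d str)) (w : homfam W' (Phi d str S))
          (Xq : rep R[i] (Qd Q d str)) (q : homfam (Phi d str X) Xq),
     is_rmod (@Qd_lab Q d str) W' -> is_hom w ->
     (forall v, row_free (w v) /\ (w v == W v)%MS) ->
     is_rmod (@Qd_lab Q d str) Xq -> is_hom q ->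
     (forall v, row_full (q v) /\ (kermx (q v) == V v)%MS) ->
     ext_image_zero (@Qd_lab Q d str) (Phi_hom iota : homfam (Phi d str X) (Phi d str Y)) (Phi_hom pi : homfam (Phi d str Y) (Phi d str S)) w q).
Proof. exact: main_gen. Qed.
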